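(* For all integers $n\ge k\ge1$, $$L_{m,\bar{\alpha}}(n+1,k)=L_{m,\bar{\alpha}}(n,k-1)+\bigl(\alpha_k+\alpha_n+(k+n)m\bigr)L_{m,\bar{\alpha}}(n,k),$$ and for all $n\ge0$, $$L_{m,\bar{\alpha}}(n,0)=\prod_{i=0}^{n-1}(\alpha_0+\alpha_i+im).$$
   Context: Fix a real number $m$ and a sequence $\bar{\alpha}=(\alpha_0,\alpha_1,\ldots)$ of real numbers. Let $(x;\bar{\alpha}|m)_n=\prod_{j=0}^{n-1}(x-\alpha_j-jm)$, with $(x;\bar{\alpha}|m)_0=1$. The $\bar{\alpha}$-Whitney numbers of the first kind $w_{m,\bar{\alpha}}(n,k)$ and second kind $W_{m,\bar{\alpha}}(n,k)$ are defined by the polynomial identities $(x;\bar{\alpha}|m)_n=\sum_{k=0}^n w_{m,\bar{\alpha}}(n,k)x^k$ and $x^n=\sum_{k=0}^n W_{m,\bar{\alpha}}(n,k)(x;\bar{\alpha}|m)_k$, both vanishing for $k>n$ or $k<0$. The $\bar{\alpha}$-Whitney-Lah numbers are $$L_{m,\bar{\alpha}}(n,k)=\sum_{j=k}^{n}(-1)^{n-j}\,w_{m,\bar{\alpha}}(n,j)\,W_{m,\bar{\alpha}}(j,k),$$ with $L_{m,\bar{\alpha}}(0,0)=1$ and $L_{m,\bar{\alpha}}(n,k)=0$ for $n<k$ or $k<0$. An empty product equals $1$. *)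

(* Defs.v *)
From HB Require Import structures.
From mathcomp Require Import all_boot all_order all_algebra.
Set Implicit Arguments. Unset Strict Implicit. Unset Printing Implicit Defensive.
Import Order.TTheory GRing.Theory Num.Theory.
Local Open Scope ring_scope.

Definition gff (R : realFieldType) (alpha : nat -> R) (m : R) (n : nat) : {poly R} :=
  \prod_(j < n) ('X - (alpha j + j%:R * m)%:P).

Definition wh1 (R : realFieldType) (alpha : nat -> R) (m : R) (n k : nat) : R :=
  (gff alpha m n)`_k.

Definition is_wh2 (R : realFieldType) (alpha : nat -> R) (m : R)
    (W : nat -> nat -> R) : Prop :=
  (forall n : nat, 'X^n = \sum_(k < n.+1) W n k *: gff alpha m k) /\
  (forall n k : nat, (n < k)%N -> W n k = 0).

Definition whLah (R : realFieldType) (alpha : nat -> R) (m : R)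
    (W : nat -> nat -> R) (n k : nat) : R :=
  \sum_(k <= j < n.+1) (-1) ^+ (n - j) * wh1 alpha m n j * W j k.

(* Main.v *)
Require Import Defs.
From HB Require Import structures.
From mathcomp Require Import all_boot all_order all_algebra.
Import Order.TTheory GRing.Theory Num.Theory.
Set Implicit Arguments. Unset Strict Implicit. Unset Printing Implicit Defensive.
Local Open Scope ring_scope.

Definition qff (R : realFieldType) (alpha : nat -> R) (m : R) (n : nat) : {poly R} :=
  \prod_(j < n) ('X + (alpha j + j%:R * m)%:P).

Lemma size_gff (R : realFieldType) (alpha : nat -> R) (m : R) n :
  size (gff alpha m n) = n.+1.
Proof. by rewrite /gff size_prod_XsubC /index_enum unlock -enumT size_enum_ord. Qed.

Lemma lead_gff (R : realFieldType) (alpha : nat -> R) (m : R) n :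
  (gff alpha m n)`_n = 1.
Proof.
have := lead_coef_prod_XsubC (index_enum 'I_n) xpredT (fun j : 'I_n => alpha j + j%:R * m).
by rewrite /lead_coef -/(gff alpha m n) size_gff.
Qed.

Lemma gff_big (R : realFieldType) (alpha : nat -> R) (m : R) n i :
  (n < i)%N -> (gff alpha m n)`_i = 0.
Proof. by move=> h; rewrite nth_default // size_gff. Qed.

Lemma size_qff (R : realFieldType) (alpha : nat -> R) (m : R) n :
  size (qff alpha m n) = n.+1.
Proof.
rewrite /qff (eq_bigr (fun j : 'I_n => 'X - (- (alpha j + j%:R * m))%:P)).
  by rewrite size_prod_XsubC /index_enum unlock -enumT size_enum_ord.
by move=> j _; rewrite polyCN opprK.
Qed.

Lemma coef_qff (R : realFieldType) (alpha : nat -> R) (m : R) n j :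
  (qff alpha m n)`_j = (-1) ^+ (n - j) * (gff alpha m n)`_j.
Proof.
elim: n j => [|n IH] j.
  by rewrite /qff /gff !big_ord0 sub0n expr0 mul1r.
rewrite /qff /gff !big_ord_recr /= -/(qff _ _ _) -/(gff _ _ _).
set c := alpha n + n%:R * m.
rewrite mulrDr mulrBr !coefD !coefN !coefMX !coefMC.
case: j => [|i] /=.
  by rewrite IH subn0 exprS add0r sub0r mulN1r mulNr mulrN opprK mulrA.
rewrite !IH subSS mulrBr; congr (_ + _).
case: (leqP n i) => h.
  by rewrite gff_big ?ltnS // !(mul0r, mulr0, oppr0).
by rewrite -(subnSK h) exprS mulN1r mulNr opprK mulrA.
Qed.

Lemma gff_uniq (R : realFieldType) (alpha : nat -> R) (m : R) N (e : nat -> R) :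
  \sum_(k < N) e k *: gff alpha m k = 0 -> forall k, (k < N)%N -> e k = 0.
Proof.
elim: N => [|N IH] H k hk; first by [].
rewrite big_ord_recr /= in H.
have eN : e N = 0.
  have := congr1 (fun p : {poly R} => p`_N) H.
  rewrite /= coefD coef_sum coefZ lead_gff mulr1 coef0 big1 ?add0r //.
  by move=> i _; rewrite coefZ gff_big ?mulr0.
rewrite eN scale0r addr0 in H.
rewrite ltnS leq_eqVlt in hk; case/orP: hk => [/eqP -> //|].
exact: IH.
Qed.

Lemma qff_expand (R : realFieldType) (alpha : nat -> R) (m : R) W :
  is_wh2 alpha m W -> forall n,
  qff alpha m n = \sum_(k < n.+1) whLah alpha m W n k *: gff alpha m k.
Proof.
move=> [HX H0] n.
rewrite -{1}(coefK (qff alpha m n)) poly_def size_qff.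
under eq_bigr => j _ do rewrite coef_qff HX scaler_sumr.
transitivity (\sum_(j < n.+1) \sum_(k < n.+1)
   ((-1) ^+ (n - j) * wh1 alpha m n j * W j k) *: gff alpha m k).
  apply: eq_bigr => j _.
  rewrite (big_ord_widen n.+1 (fun k => ((-1) ^+ (n - j) * (gff alpha m n)`_j) *: (W j k *: gff alpha m k)) (ltn_ord j)).
  rewrite big_mkcond; apply: eq_bigr => k _.
  case: ifP => hk; first by rewrite scalerA.
  rewrite H0; [by rewrite mulr0 scale0r | by rewrite ltnNge -ltnS hk].
rewrite exchange_big; apply: eq_bigr => k _.
rewrite -scaler_suml; congr (_ *: _).
rewrite /whLah -(big_mkord xpredT (fun j => (-1) ^+ (n - j) * wh1 alpha m n j * W j k)).
rewrite (big_cat_nat (leq0n k) (ltnW (ltn_ord k))) /=.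
rewrite big_nat_cond big1 ?add0r // => j /andP [/andP [_ hj] _].
by rewrite H0 ?mulr0.
Qed.

From mathcomp Require Import ring.

Lemma gff_step (R : realFieldType) (alpha : nat -> R) (m : R) k (c : R) :
  gff alpha m k * ('X + c%:P) =
  gff alpha m k.+1 + (alpha k + k%:R * m + c) *: gff alpha m k.
Proof.
rewrite {2}/gff big_ord_recr /= -/(gff alpha m k) -mul_polyC polyCD.
ring.
Qed.

Lemma whLah_big (R : realFieldType) (alpha : nat -> R) (m : R) W n k :
  (n < k)%N -> whLah alpha m W n k = 0.
Proof. by move=> h; rewrite /whLah big_geq. Qed.

Lemma rec_all (R : realFieldType) (alpha : nat -> R) (m : R) W :
  is_wh2 alpha m W -> forall n k, (k < n.+2)%N ->
  whLah alpha m W n.+1 k =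
   (if k is k'.+1 then whLah alpha m W n k' else 0) +
   (alpha k + k%:R * m + (alpha n + n%:R * m)) * whLah alpha m W n k.
Proof.
move=> HW n.
set L := whLah alpha m W.
set c := alpha n + n%:R * m.
set e := fun k : nat => (if k is k'.+1 then L n k' else 0) +
   (alpha k + k%:R * m + c) * L n k.
have E : \sum_(k < n.+2) e k *: gff alpha m k = qff alpha m n.+1.
  have -> : qff alpha m n.+1 = qff alpha m n * ('X + c%:P) by rewrite /qff big_ord_recr.
  rewrite (qff_expand HW) mulr_suml.
  under [RHS]eq_bigr => k _ do rewrite -scalerAl gff_step scalerDr scalerA.
  rewrite big_split /=.
  under eq_bigr => k _ do rewrite /e scalerDl.
  rewrite big_split /=; congr (_ + _).
    by rewrite big_ord_recl /= scale0r add0r.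
  rewrite big_ord_recr /= /L whLah_big // mulr0 scale0r addr0.
  by apply: eq_bigr => k _; rewrite mulrC.
have E2 := qff_expand HW n.+1.
move=> k hk.
apply/eqP; rewrite -subr_eq0; apply/eqP.
apply: (@gff_uniq R alpha m n.+2 (fun k => L n.+1 k - e k)) => //.
under eq_bigr => i _ do rewrite scalerBl.
by rewrite sumrB E -E2 subrr.
Qed.

Theorem mainTheorem10 (R : realFieldType) (m : R) (alpha : nat -> R)
    (W : nat -> nat -> R) (HW : is_wh2 alpha m W) :
  (forall n k : nat, (1 <= k)%N -> (k <= n)%N ->
     whLah alpha m W n.+1 k =
       whLah alpha m W n k.-1 + (alpha k + alpha n + (k + n)%:R * m) * whLah alpha m W n k) /\
  (forall n : nat,
     whLah alpha m W n 0 = \prod_(i < n) (alpha 0%N + alpha i + i%:R * m)).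
Proof.
split.
  move=> n [|k] // _ hk.
  rewrite (rec_all HW); last by rewrite !ltnS ltnW.
  have -> : (k.+1 + n)%:R = k.+1%:R + n%:R :> R by rewrite -natrD.
  rewrite /=; ring.
elim=> [|n IH].
  rewrite big_ord0.
  have := qff_expand HW 0; rewrite /qff !big_ord0 big_ord1 /gff big_ord0.
  move/(congr1 (fun p : {poly R} => p`_0)); rewrite coefZ coefC /= mulr1.
  by move->.
rewrite (rec_all HW) // add0r IH big_ord_recr /=; ring.

Qed.
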